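(* For every formula (type expression) $A$, the judgment $\vdash(\bullet A\to A)\to A$ is derivable in $\mathbf{LA}\mu$. Consequently the rule ''from $\Gamma\vdash\bullet A\to A$ infer $\Gamma\vdash A$'' is derivable in $\mathbf{LA}\mu$.
   Context: Type expressions: fix a countably infinite set of type variables $X,Y,Z,\dots$. Pseudo type expressions are generated by $A::=X\mid A\to A\mid \bullet A\mid \mu X.A$ ($\mu$ binds $X$; $\alpha$-convertible expressions are identified; $\to$ associates to the right; $\bullet$ binds tighter than $\to$, which binds tighter than $\mu$). $A[B/X]$ denotes capture-avoiding substitution. $\top$ abbreviates $\mu X.\bullet X$. $A$ is proper in $X$ iff: a variable $Y$ is proper in $X$ iff $Y\neq X$; $\bullet A$ is always proper in $X$; $A\to B$ is proper in $X$ iff both $A,B$ are proper in $X$ or $B$ is a $\top$-variant; for $Y\ne X$, $\mu Y.A$ is proper in $X$ iff $A$ is proper in $X$ or $\mu Y.A$ is a $\top$-variant, where $\top$-variants are defined via the tail $t(X)=X$, $t(A\to B)=t(B)$, $t(\bullet A)=\bullet t(A)$, $t(\mu X.A)=\mu X.t(A)$, which has the form $\bullet^{m_0}\mu X_1.\bullet^{m_1}\cdots\mu X_n.\bullet^{m_n}Y$, and $A$ is a $\top$-variant iff $Y=X_i$ for some $i$ with $X_i\notin\{X_{i+1},\dots,X_n\}$ and $m_i+\dots+m_n\ge1$. Type expressions (formulae) are the least set of pseudo type expressions containing all type variables, closed under $\to$ and $\bullet$, and containing $\mu X.A$ whenever it contains $A$ and $A$ is proper in $X$. The formal system $\mathbf{LA}\mu$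 derives judgments $\Gamma\vdash A$ ($\Gamma$ a finite set of formulae, $\bullet\Gamma=\{\bullet B\mid B\in\Gamma\}$) by the rules: (assump) $\Gamma\cup\{A\}\vdash A$; (nec) from $\Gamma_1\vdash A$ infer $\bullet\Gamma_1\cup\Gamma_2\vdash\bullet A$; (4) from $\Gamma\vdash\bullet A$ infer $\Gamma\vdash\bullet\bullet A$; ($\to$I) from $\Gamma\cup\{A\}\vdash B$ infer $\Gamma\vdash A\to B$; ($\to$E) from $\Gamma_1\vdash A\to B$ and $\Gamma_2\vdash A$ infer $\Gamma_1\cup\Gamma_2\vdash B$; (fold) from $\Gamma\vdash A[\mu X.A/X]$ infer $\Gamma\vdash\mu X.A$; (unfold) from $\Gamma\vdash\mu X.A$ infer $\Gamma\vdash A[\mu X.A/X]$; (L) from $\Gamma\vdash\bullet A\to\bullet B$ infer $\Gamma\vdash\bullet(A\to B)$; (approx) from $\Gamma\vdash A$ infer $\Gamma\vdash\bullet A$. $\vdash A$ means $\{\}\vdash A$. *)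

(* Defs.v *)
(* Type expressions of LAmu in de Bruijn representation:
   alpha-convertible expressions are identified by construction. *)
From Stdlib Require Import List Arith.
Import ListNotations.

(* Pseudo type expressions: A ::= X | A -> A | bullet A | mu X. A.
   [Var j] is a de Bruijn index: it refers to the (j+1)-th enclosing mu
   binder, or (if j >= number of enclosing binders) to a free type variable. *)
Inductive ty : Type :=
| Var : nat -> ty
| Arr : ty -> ty -> ty
| Bul : ty -> ty
| Mu  : ty -> ty.

Fixpoint lift (c : nat) (A : ty) : ty :=
  match A with
  | Var j => if j <? c then Var j else Var (S j)
  | Arr A1 A2 => Arr (lift c A1) (lift c A2)
  | Bul A1 => Bul (lift c A1)
  | Mu A1 => Mu (lift (S c) A1)
  end.

Fixpoint subst (k : nat) (B : ty) (A : ty) : ty :=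
  match A with
  | Var j => if j =? k then B else if k <? j then Var (pred j) else Var j
  | Arr A1 A2 => Arr (subst k B A1) (subst k B A2)
  | Bul A1 => Bul (subst k B A1)
  | Mu A1 => Mu (subst (S k) (lift 0 B) A1)
  end.

Definition unfold_mu (A : ty) : ty := subst 0 (Mu A) A.

Definition top : ty := Mu (Bul (Var 0)).

Fixpoint tail (A : ty) : ty :=
  match A with
  | Var j => Var j
  | Arr _ B => tail B
  | Bul A1 => Bul (tail A1)
  | Mu A1 => Mu (tail A1)
  end.

(* Reading a tail  bullet^m0 mu X1. bullet^m1 ... mu Xn. bullet^mn Y.
   [ctx] lists the enclosing binders, innermost first; the boolean records
   whether at least one bullet occurs after that binder (m_i+...+m_n >= 1).
   The variable Y is X_i with X_i not rebound later exactly when its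
   de Bruijn index points to binder i. *)
Fixpoint tv_aux (ctx : list bool) (A : ty) : bool :=
  match A with
  | Var j => nth j ctx false
  | Arr _ B => tv_aux ctx B
  | Bul A1 => tv_aux (map (fun _ => true) ctx) A1
  | Mu A1 => tv_aux (false :: ctx) A1
  end.

Definition top_variant (A : ty) : bool := tv_aux [] (tail A).

Fixpoint proper (k : nat) (A : ty) : bool :=
  match A with
  | Var j => negb (j =? k)
  | Bul _ => true
  | Arr A1 A2 => (proper k A1 && proper k A2) || top_variant A2
  | Mu A1 => proper (S k) A1 || top_variant (Mu A1)
  end.

Inductive formula : ty -> Prop :=
| f_var : forall j, formula (Var j)
| f_arr : forall A B, formula A -> formula B -> formula (Arr A B)
| f_bul : forall A, formula A -> formula (Bul A)
| f_mu  : forall A, formula A -> proper 0 A = true -> formula (Mu A).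

(* Finite sets of formulae are represented by lists, up to having the same
   elements; [seteq D S] says D represents the same set as S. *)
Definition seteq (D S : list ty) : Prop := forall x, In x D <-> In x S.

Definition wf_judg (G : list ty) (A : ty) : Prop :=
  Forall formula G /\ formula A.

(* The system LAmu; every rule's conclusion context may be any list
   representing the set-theoretic context of the rule. *)
Inductive derives : list ty -> ty -> Prop :=
| r_assump : forall G A D, seteq D (A :: G) -> wf_judg D A -> derives D A
| r_nec : forall G1 G2 A D, derives G1 A ->
    seteq D (map Bul G1 ++ G2) -> wf_judg D (Bul A) -> derives D (Bul A)
| r_4 : forall G A, derives G (Bul A) -> wf_judg G (Bul (Bul A)) ->
    derives G (Bul (Bul A))
| r_arrI : forall G A B, derives (A :: G) B -> wf_judg G (Arr A B) ->
    derives G (Arr A B)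
| r_arrE : forall G1 G2 A B D, derives G1 (Arr A B) -> derives G2 A ->
    seteq D (G1 ++ G2) -> wf_judg D B -> derives D B
| r_fold : forall G A, derives G (unfold_mu A) -> wf_judg G (Mu A) ->
    derives G (Mu A)
| r_unfold : forall G A, derives G (Mu A) -> wf_judg G (unfold_mu A) ->
    derives G (unfold_mu A)
| r_L : forall G A B, derives G (Arr (Bul A) (Bul B)) ->
    wf_judg G (Bul (Arr A B)) -> derives G (Bul (Arr A B))
| r_approx : forall G A, derives G A -> wf_judg G (Bul A) ->
    derives G (Bul A).

(* Main.v *)
Require Import Defs.
From Stdlib Require Import List Arith Lia Bool.
Import ListNotations.

Lemma tv_lift : forall A ctx c, length ctx <= c ->
  tv_aux ctx (Defs.tail (lift c A)) = tv_aux ctx (Defs.tail A).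
Proof.
  induction A; intros ctx c Hl; simpl.
  - destruct (Nat.ltb_spec n c); simpl; auto.
    rewrite !nth_overflow; auto; lia.
  - apply IHA2; auto.
  - apply IHA. rewrite length_map. auto.
  - apply IHA. simpl. lia.
Qed.

Lemma top_variant_lift : forall A c, top_variant (lift c A) = top_variant A.
Proof. intros. unfold top_variant. apply tv_lift. simpl. lia. Qed.

Lemma proper_lift_ge : forall A k c, c <= k -> proper (S k) (lift c A) = proper k A.
Proof.
  induction A; intros k c H; simpl.
  - destruct (Nat.ltb_spec n c); simpl.
    + destruct (Nat.eqb_spec n (S k)); destruct (Nat.eqb_spec n k); try lia; auto.
    + reflexivity.
  - rewrite IHA1, IHA2, top_variant_lift; auto.
  - reflexivity.
  - rewrite IHA by lia. f_equal. apply (top_variant_lift (Mu A) c).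
Qed.

Lemma proper_lift_lt : forall A k c, k < c -> proper k (lift c A) = proper k A.
Proof.
  induction A; intros k c H; simpl.
  - destruct (Nat.ltb_spec n c); auto.
    unfold proper. replace (S n =? k) with false by (symmetry; apply Nat.eqb_neq; lia). replace (n =? k) with false by (symmetry; apply Nat.eqb_neq; lia). reflexivity.
  - rewrite IHA1, IHA2, top_variant_lift; auto.
  - reflexivity.
  - rewrite IHA by lia. f_equal. apply (top_variant_lift (Mu A) c).
Qed.

Lemma proper_lift_self : forall A c, proper c (lift c A) = true.
Proof.
  induction A; intros c; simpl.
  - destruct (Nat.ltb_spec n c); unfold proper; apply negb_true_iff, Nat.eqb_neq; lia.
  - rewrite IHA1, IHA2. reflexivity.
  - reflexivity.
  - rewrite IHA. reflexivity.
Qed.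

Lemma formula_lift : forall A, formula A -> forall c, formula (lift c A).
Proof.
  induction 1; intros c; simpl.
  - destruct (j <? c); constructor.
  - constructor; auto.
  - constructor; auto.
  - constructor; auto. rewrite proper_lift_lt by lia. auto.
Qed.

Lemma subst_lift : forall A c B, subst c B (lift c A) = A.
Proof.
  induction A; intros c B; simpl.
  - destruct (Nat.ltb_spec n c); cbn [subst].
    + destruct (Nat.eqb_spec n c); try lia. destruct (Nat.ltb_spec c n); try lia. auto.
    + destruct (Nat.eqb_spec (S n) c); try lia. destruct (Nat.ltb_spec c (S n)); try lia. auto.
  - rewrite IHA1, IHA2; auto.
  - rewrite IHA; auto.
  - rewrite IHA; auto.
Qed.

Ltac se := unfold seteq; intro; simpl; tauto.
Ltac wf := split; repeat (first [assumption | constructor]); auto.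

Lemma part1 : forall A : ty, formula A -> derives [] (Arr (Arr (Bul A) A) A).
Proof.
  intros A HA.
  set (DB := Arr (Bul (Var 0)) (lift 0 A)).
  set (D := Mu DB).
  set (F := Arr (Bul A) A).
  assert (HD : formula D).
  { unfold D, DB. constructor. constructor. constructor. constructor.
    apply formula_lift; auto. simpl. rewrite proper_lift_self. reflexivity. }
  assert (Heq : unfold_mu DB = Arr (Bul D) A).
  { unfold unfold_mu, DB. simpl. rewrite subst_lift. reflexivity. }
  assert (HF : formula F) by (unfold F; repeat constructor; auto).
  assert (H1 : derives [D] D) by (apply r_assump with (G := []); [se | wf]).
  assert (H2 : derives [D] (Arr (Bul D) A)).
  { rewrite <- Heq. apply r_unfold; auto. rewrite Heq. wf. }
  assert (H3 : derives [D] (Bul D)) by (apply r_approx; auto; wf).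
  assert (H4 : derives [D] A) by (apply (r_arrE [D] [D] (Bul D)); auto; [se | wf]).
  assert (H5 : derives [Bul D; F] (Bul A))
    by (apply (r_nec [D] [F]); auto; [se | wf]).
  assert (H6 : derives [Bul D; F] F) by (apply r_assump with (G := [Bul D]); [se | wf]).
  assert (H7 : derives [Bul D; F] A)
    by (apply (r_arrE [Bul D; F] [Bul D; F] (Bul A)); auto; [se | wf]).
  assert (H8 : derives [F] (Arr (Bul D) A)) by (apply r_arrI; auto; wf).
  assert (H9 : derives [F] D).
  { unfold D. apply r_fold. rewrite Heq. auto. wf. }
  assert (H10 : derives [F] (Bul D)) by (apply r_approx; auto; wf).
  assert (H12 : derives [F] A)
    by (apply (r_arrE [F] [F] (Bul D)); auto; [se | wf]).
  apply r_arrI; auto. wf.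
Qed.

Theorem proposition10 :
  (forall A : ty, formula A -> derives [] (Arr (Arr (Bul A) A) A)) /\
  (forall (G : list ty) (A : ty), Forall formula G -> formula A ->
     derives G (Arr (Bul A) A) -> derives G A).
Proof.
  split.
  - exact part1.
  - intros G A HG HA H.
    apply (r_arrE [] G (Arr (Bul A) A)); auto.
    + apply part1; auto.
    + se.
    + split; auto.
Qed.
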